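(* Let $G$ be an abelian group, $t$ a positive integer, and $U,V\subset G$ finite sets with $t\leq |V|\leq |U|$. Then \[\sum _{x\in G} \min(1_U*1_V(x), t)\ge t\big(|U|+|V|-t-\alpha(U,V)\big).\]
   Context: For $x\in G$, $1_U*1_V(x)$ is the number of pairs $(u,v)\in U\times V$ with $u+v=x$. For finite $U,V\subset G$, $\alpha(U,V)=\max\{|V'|: V'\subset G,\ |V'|\leq |V|,\ |\langle V'\rangle|\leq |U|+|V|-|V'|\}$, where $\langle V'\rangle$ is the subgroup generated by $V'$. *)

(* Defs.v *)
From HB Require Import structures.
From mathcomp Require Import all_boot all_order all_algebra.
From Stdlib Require Import ClassicalEpsilon.
Set Implicit Arguments. Unset Strict Implicit. Unset Printing Implicit Defensive.
Import Order.TTheory GRing.Theory Num.Theory.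
Local Open Scope ring_scope.

(* An abelian group G is a zmodType (possibly infinite).
   A finite subset of G is represented by a duplicate-free sequence. *)

Definition in_gen (G : zmodType) (V' : seq G) (x : G) : Prop :=
  exists c : seq int, x = \sum_(i < size V') V'`_i *~ c`_i.

Definition card_le (G : eqType) (P : G -> Prop) (n : nat) : Prop :=
  exists s : seq G, (size s <= n)%N /\ forall x, P x -> x \in s.

(* 1_U * 1_V (x) = number of pairs (u,v) in U x V with u + v = x. *)
Definition rconv (G : zmodType) (U V : seq G) (x : G) : nat :=
  count (fun p : G * G => p.1 + p.2 == x) [seq (u, v) | u <- U, v <- V].

(* The sumset U + V, outside of which 1_U * 1_V vanishes. *)
Definition sumset (G : zmodType) (U V : seq G) : seq G :=
  undup [seq u + v | u <- U, v <- V].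

Definition alpha_cand (G : zmodType) (U V : seq G) (k : nat) : Prop :=
  exists V' : seq G, [/\ uniq V', size V' = k, (k <= size V)%N &
    card_le (in_gen V') (size U + size V - k)%N].

Definition asbool (P : Prop) : bool :=
  if excluded_middle_informative P then true else false.

Definition alpha (G : zmodType) (U V : seq G) : nat :=
  (\max_(k < (size V).+1 | asbool (alpha_cand U V k)) k)%N.

(* Main.v *)
Require Import Defs.
From HB Require Import structures.
From mathcomp Require Import all_boot all_order all_algebra.
From mathcomp Require Import zify.
From Stdlib Require Import ClassicalEpsilon.
Import Order.TTheory GRing.Theory Num.Theory.
Set Implicit Arguments. Unset Strict Implicit.


Section R.
Variable G : zmodType.
Implicit Types U V A B X Y L : seq G.

Definition rr U V (x : G) : nat := \sum_(u <- U) \sum_(v <- V) ((u + v)%R == x : nat).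

Lemma rr_catl U1 U2 V x : rr (U1 ++ U2) V x = rr U1 V x + rr U2 V x.
Proof. by rewrite /rr big_cat. Qed.

Lemma rr_catr U V1 V2 x : rr U (V1 ++ V2) x = rr U V1 x + rr U V2 x.
Proof. by rewrite /rr -big_split /=; apply: eq_bigr => u _; rewrite big_cat. Qed.

Lemma rrC U V x : rr U V x = rr V U x.
Proof. by rewrite /rr exchange_big /=; apply: eq_bigr => v _; apply: eq_bigr => u _; rewrite addrC. Qed.

Lemma rr_perml U1 U2 V x : perm_eq U1 U2 -> rr U1 V x = rr U2 V x.
Proof. by move=> p; rewrite /rr (perm_big _ p). Qed.

Lemma rr_permr U V1 V2 x : perm_eq V1 V2 -> rr U V1 x = rr U V2 x.
Proof. by move=> p; rewrite rrC (rr_perml _ _ p) rrC. Qed.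

Lemma sum_eqx (L : seq G) y : uniq L -> \sum_(x <- L) (y == x : nat) = (y \in L).
Proof.
elim: L => [|z L IH]; first by rewrite big_nil.
rewrite big_cons /= in_cons => /andP [zL uL]; rewrite IH //.
case: eqP => [->|]; last by [].
by rewrite (negbTE zL).
Qed.

Lemma count_eq1 (s : seq G) (f : G -> G) y : injective f -> uniq s ->
  \sum_(v <- s) (f v == y : nat) <= 1.
Proof.
move=> fi; elim: s => [|v s IH]; first by rewrite big_nil.
rewrite big_cons /= => /andP [vs us].
case: eqP => [<-|_]; last by rewrite add0n IH.
rewrite big1_seq ?addn0 //.
move=> w /andP [_ ws]; apply/eqP; rewrite eqb0.
by apply/eqP => /fi e; move: vs; rewrite -e ws.
Qed.

Lemma rr_le U V x : uniq U -> rr U V x <= size V.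
Proof.
move=> uU; rewrite rrC /rr -sum1_size big_seq_cond [X in _ <= X]big_seq_cond.
apply: leq_sum => v _; apply: count_eq1 => //; exact: addrI.
Qed.

Lemma rr_sum U V L : uniq L -> (forall u v, u \in U -> v \in V -> (u + v)%R \in L) ->
  \sum_(x <- L) rr U V x = size U * size V.
Proof.
move=> uL h; transitivity (\sum_(u <- U) \sum_(v <- V) 1).
  rewrite /rr exchange_big /= big_seq_cond [RHS]big_seq_cond.
  apply: eq_bigr => u /andP [uU _]; rewrite exchange_big /= big_seq_cond [RHS]big_seq_cond.
  apply: eq_bigr => v /andP [vV _].
  rewrite (eq_bigr (fun x => ((u + v)%R == x : nat))) //.
  by rewrite sum_eqx // h.
rewrite (eq_bigr (fun=> size V)) ?sum1_size //.
by rewrite big_const_seq count_predT iter_addn_0 mulnC.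
Qed.

Lemma pfC (a : pred G) (s : seq G) : perm_eq s ([seq y <- s | a y] ++ [seq y <- s | ~~ a y]).
Proof. by rewrite perm_sym; apply/permPl; exact: perm_filterC. Qed.

Lemma perm_split A B : uniq A -> uniq B ->
  perm_eq B ([seq y <- A | y \in B] ++ [seq y <- B | y \notin A]).
Proof.
move=> uA uB.
apply: perm_trans (pfC (mem A) B) _; rewrite perm_cat2r.
apply: uniq_perm; rewrite ?filter_uniq // => y; rewrite !mem_filter andbC //.
Qed.

Lemma rr_decomp A B x : uniq A -> uniq B ->
 rr A B x = rr (A ++ [seq y <- B | y \notin A]) [seq y <- A | y \in B] x
   + rr [seq y <- A | y \notin B] [seq y <- B | y \notin A] x.
Proof.
move=> uA uB.
set X := [seq y <- A | y \in B]; set A' := [seq y <- A | y \notin B]; set B' := [seq y <- B | y \notin A].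
have pA : perm_eq A (X ++ A') by exact: (pfC (mem B) A).
have pB : perm_eq B (X ++ B') by exact: perm_split.
rewrite (rr_perml _ _ pA) (rr_permr _ _ pB) rr_catl !rr_catr rr_catl (rr_perml _ _ pA) rr_catl.
rewrite (rrC B') rr_catl; lia.
Qed.


Lemma size_split A B : uniq A -> uniq B ->
  size B = size [seq y <- A | y \in B] + size [seq y <- B | y \notin A].
Proof. by move=> uA uB; rewrite -size_cat; apply: perm_size; apply: perm_split. Qed.

Lemma size_splitA A B : size A = size [seq y <- A | y \in B] + size [seq y <- A | y \notin B].
Proof. by rewrite -size_cat; apply: perm_size; exact: (pfC (mem B) A). Qed.

End R.


Section A.
Variable G : zmodType.
Implicit Types U V W : seq G.

Lemma asboolP (P : Prop) : asbool P = true <-> P.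
Proof. by rewrite /asbool; case: excluded_middle_informative. Qed.

Lemma alpha_mono U V U' V' : size U' + size V' <= size U + size V -> size V' <= size V ->
  alpha U' V' <= alpha U V.
Proof.
move=> hs hv; rewrite /alpha; apply/bigmax_leqP => k /asboolP [W [uW sW kV' [s [hs' hm]]]].
have kb : k < (size V).+1 by rewrite ltnS; apply: leq_trans kV' hv.
apply: (@leq_bigmax_cond _ _ (fun i : 'I_(size V).+1 => nat_of_ord i) (Ordinal kb)).
apply/asboolP; exists W; split => //=.
by exists s; split => //; apply: (leq_trans hs'); apply: leq_sub2r.
Qed.

Lemma alpha_ge U V : alpha_cand U V (size V) -> size V <= alpha U V.
Proof.
move=> h; rewrite /alpha.
apply: (@leq_bigmax_cond _ _ (fun i : 'I_(size V).+1 => nat_of_ord i) ord_max).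
by apply/asboolP.
Qed.

Lemma alpha_le U V : alpha U V <= size V.
Proof. by rewrite /alpha; apply/bigmax_leqP => k _; rewrite -ltnS. Qed.

Definition closedU U (y : G) := forall u, u \in U -> (u + y)%R \in U.

Lemma closedU_muln U w n : closedU U w -> closedU U (w *+ n).
Proof.
move=> h; elim: n => [|n IH] u uU; first by rewrite mulr0n addr0.
by rewrite mulrS addrA; apply: IH; apply: h.
Qed.

Lemma closedU_mulz U w z : closedU U w -> closedU U (- w) -> closedU U (w *~ z).
Proof.
move=> h1 h2; case: z => n; first exact: closedU_muln.
by rewrite NegzE mulrNz -mulNrn; apply: closedU_muln.
Qed.

Lemma term_cand U V : uniq V -> (0 < size V) -> (0 < size U) ->
  (forall u v v', u \in U -> v \in V -> v' \in V -> (u + (v' - v))%R \in U) ->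
  alpha_cand U V (size V).
Proof.
move=> uV sV sU h.
set v0 := head 0%R V; set u0 := head 0%R U.
have v0V : v0 \in V by rewrite /v0; case: V sV {uV h v0} => //= *; rewrite mem_head.
have u0U : u0 \in U by rewrite /u0; case: U sU {h u0} => //= *; rewrite mem_head.
exists (map (fun v => v - v0)%R V); split.
- by rewrite map_inj_uniq //; apply: addIr.
- by rewrite size_map.
- by [].
exists (map (fun u => u - u0)%R U); split; first by rewrite size_map addnK.
move=> x [c ->]; apply/mapP.
set y := (\sum_(_ < _) _)%R.
exists (u0 + y)%R; last by rewrite [(u0 + y)%R]addrC addrK.
have : closedU U y.
  rewrite /y; apply: (big_ind (closedU U)).
  - by move=> u uU; rewrite addr0.
  - by move=> a b ha hb u uU; rewrite addrA; apply: hb; apply: ha.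
  move=> i _; apply: closedU_mulz.
  + have : nth 0%R (map (fun v => v - v0)%R V) i \in map (fun v => v - v0)%R V by apply: mem_nth.
    by case/mapP => v vV ->; move=> u uU; apply: h.
  + have : nth 0%R (map (fun v => v - v0)%R V) i \in map (fun v => v - v0)%R V by apply: mem_nth.
    by case/mapP => v vV ->; move=> u uU; rewrite opprB; apply: h.
by apply.
Qed.
End A.


Section M.
Variable G : zmodType.
Implicit Types U V X Y L : seq G.

Lemma sum_gt0 (T : eqType) (s : seq T) (F : T -> nat) :
  0 < \sum_(i <- s) F i -> exists2 i, i \in s & 0 < F i.
Proof.
elim: s => [|a s IH]; first by rewrite big_nil.
rewrite big_cons; case: (posnP (F a)) => [->|h] /=.
  by rewrite add0n => /IH [i hi hF]; exists i => //; rewrite in_cons hi orbT.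
by move=> _; exists a => //; rewrite mem_head.
Qed.

Lemma rr_pos U V u v : u \in U -> v \in V -> 0 < rr U V (u + v)%R.
Proof.
move=> uU vV; rewrite /rr (big_rem u) //= (big_rem v) //= eqxx; lia.
Qed.

Lemma rr_posE U V x : 0 < rr U V x -> exists u v, [/\ u \in U, v \in V & x = (u + v)%R].
Proof.
rewrite /rr => /sum_gt0 [u uU] /sum_gt0 [v vV].
by case: eqP => // <- _; exists u, v.
Qed.

Lemma rr_shift U V e y : rr U (map (fun v => v + e)%R V) (y + e)%R = rr U V y.
Proof.
rewrite /rr; apply: eq_bigr => u _; rewrite big_map; apply: eq_bigr => v _.
by rewrite addrA (inj_eq (addIr e)).
Qed.

Lemma sum_min_ge U V L t : uniq U -> t <= size V -> uniq L ->
  (forall x, 0 < rr U V x -> x \in L) ->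
  size U * t <= \sum_(x <- L) minn (rr U V x) t.
Proof.
move=> uU htV uL hL.
have st : size (take t V) = t by rewrite size_take; case: ltnP => //; lia.
rewrite -{1}st -(rr_sum (V := take t V) uL); last first.
  by move=> u v uU1 vV; apply: hL; apply: rr_pos => //; apply: mem_take vV.
apply: leq_sum => x _.
have := rr_le (take t V) x uU.
have -> : rr U V x = rr U (take t V) x + rr U (drop t V) x by rewrite -rr_catr cat_take_drop.
rewrite st; lia.
Qed.
End M.


Section Main.
Variable G : zmodType.
Implicit Types U V X Y L : seq G.

Lemma main n : forall t U V L, size V <= n -> 0 < t -> uniq U -> uniq V ->
  t <= size V -> size V <= size U -> uniq L -> (forall x, 0 < rr U V x -> x \in L) ->
  (t%:Z * ((size U)%:Z + (size V)%:Z - t%:Z - (alpha U V)%:Z) <=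
     (\sum_(x <- L) minn (rr U V x) t)%:Z)%R.
Proof.
elim: n => [|n IH] t U V L hn ht uU uV htV hVU uL hL; first by lia.
set D := [seq (u - v)%R | u <- U, v <- V].
set c := fun e => count (mem (map (fun v => v + e)%R V)) U.
case: (boolP (has (fun e => (0 < c e) && (c e < size V)) D)) => [hD|hD].
  case/hasP: hD => e eD /andP [c0 cb].
  set B := map (fun v => v + e)%R V.
  have uB : uniq B by rewrite map_inj_uniq //; exact: addIr.
  have sB : size B = size V by rewrite size_map.
  set X := [seq y <- U | y \in B]; set A' := [seq y <- U | y \notin B].
  set B' := [seq y <- B | y \notin U]; set Y := U ++ B'.
  have sX : size X = c e by rewrite size_filter.
  have sB' := size_split uU uB; rewrite -/X -/B' sB in sB'.
  have sA' := size_splitA U B; rewrite -/X -/A' in sA'.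
  have sY : size Y = size U + size B' by rewrite size_cat.
  have uY : uniq Y.
    rewrite cat_uniq uU filter_uniq // andbT /=.
    by apply/hasPn => y; rewrite mem_filter => /andP [h _].
  set L2 := map (fun x => x + e)%R L.
  have uL2 : uniq L2 by rewrite map_inj_uniq //; exact: addIr.
  have hsum : (\sum_(x <- L) minn (rr U V x) t = \sum_(x <- L2) minn (rr U B x) t)%N.
    by rewrite big_map; apply: eq_bigr => x _; rewrite rr_shift.
  have hL2 : forall x, 0 < rr U B x -> x \in L2.
    move=> x; rewrite -(subrK e x) rr_shift => /hL h; exact: map_f.
  have hdec : forall x, rr U B x = rr Y X x + rr A' B' x by move=> x; apply: rr_decomp.
  have hal : alpha U B = alpha U V by apply/eqP; rewrite eqn_leq !alpha_mono // sB.
  rewrite hsum.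
  case: (leqP t (size X)) => hts.
    have sXU : size X <= size U by rewrite size_filter count_size.
    have hXY : size X <= size Y by rewrite sY; lia.
    have hXn : size X <= n.
      lia.
    have := IH t Y X L2 hXn ht uY (filter_uniq _ uU) hts hXY uL2.
    have hle : (\sum_(x <- L2) minn (rr Y X x) t <= \sum_(x <- L2) minn (rr U B x) t)%N.
      by apply: leq_sum => x _; rewrite hdec; lia.
    have hal2 : alpha Y X <= alpha U V.
      apply: alpha_mono; set sx := size X in sB' sX sXU hXY hXn hts *; set sb := size B' in sY sB' *; lia.
    have hsupp : (forall x, 0 < rr Y X x -> x \in L2) by move=> x hx; apply: hL2; rewrite hdec; lia.
    move=> /(_ hsupp) hIH.
    move: hle hal2 hIH; set S1 := (\sum_(x <- L2) minn (rr Y X x) t)%N.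
    set S2 := (\sum_(x <- L2) _)%N; set a1 := alpha Y X; set a2 := alpha U V.
    set sx := size X in sB' sX sXU hXY hXn hts *; set sb := size B' in sY sB' *.
    set sy := size Y in sY hXY *.
    move=> hle hal2 hIH.
    nia.
  have uA' : uniq A' by apply: filter_uniq.
  have uB' : uniq B' by apply: filter_uniq.
  have hsupp : (forall x, 0 < rr A' B' x -> x \in L2) by move=> x hx; apply: hL2; rewrite hdec; lia.
  have hsuppY : forall y x, y \in Y -> x \in X -> (y + x)%R \in L2.
    by move=> y x yY xX; apply: hL2; rewrite hdec; have := rr_pos yY xX; lia.
  have hsumY := rr_sum uL2 hsuppY.
  have hrY : forall x, rr Y X x <= size X by move=> x; apply: rr_le.
  have hge : (\sum_(x <- L2) rr Y X x + \sum_(x <- L2) minn (rr A' B' x) (t - size X)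
       <= \sum_(x <- L2) minn (rr U B x) t)%N.
    rewrite -big_split /=; apply: leq_sum => x _; rewrite hdec; have := hrY x.
    set sx := size X; lia.
  have hal2 : alpha A' B' <= alpha U V.
    apply: alpha_mono; set sx := size X in sB' sA' *; set sb := size B' in sB' *; set sa := size A' in sA' *; lia.
  have hBA : size B' <= size A'.
    set sx := size X in sB' sA' *; set sb := size B' in sB' *; set sa := size A' in sA' *; lia.
  have hBn : size B' <= n.
    move: sX c0; set sx := size X in sB' sA' hts *; set sb := size B' in sB' *; move=> sX c0; lia.
  have htB : t - size X <= size B'.
    set sx := size X in sB' sA' hts *; set sb := size B' in sB' *; lia.
  have ht' : 0 < t - size X by rewrite subn_gt0.
  have := IH (t - size X) A' B' L2 hBn ht' uA' uB' htB hBA uL2 hsupp.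
  move: hge hal2 hsumY; set S1 := (\sum_(x <- L2) rr Y X x)%N.
  set S2 := (\sum_(x <- L2) minn (rr A' B' x) _)%N.
  set S3 := (\sum_(x <- L2) _)%N; set a1 := alpha A' B'; set a2 := alpha U V.
  set sx := size X in sB' sA' sX hts *; set sb := size B' in sY sB' *.
  set sy := size Y in sY *; set sa := size A' in sA' *.
  move=> hge hal2 hsumY hIH.
  nia.

have hcl : forall u v v', u \in U -> v \in V -> v' \in V -> (u + (v' - v))%R \in U.
  move=> u v v' uU1 vV v'V.
  have eD : (u - v)%R \in D by apply: allpairs_f.
  have := hasPn hD _ eD; rewrite negb_and -leqNgt leqn0.
  have c1 : 0 < c (u - v)%R.
    rewrite /c -has_count; apply/hasP; exists u => //; apply/mapP; exists v => //.
    by rewrite addrC subrK.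
  rewrite lt0n in c1; rewrite (negbTE c1) /= => cge.
  set e := (u - v)%R in cge.
  have sub : {subset [seq y <- U | y \in map (fun w => w + e)%R V] <= map (fun w => w + e)%R V}.
    by move=> y; rewrite mem_filter => /andP [].
  have hsz : size (map (fun w => w + e)%R V) <= size [seq y <- U | y \in map (fun w => w + e)%R V].
    by rewrite size_map size_filter leqNgt; exact: cge.
  have [_ heq] := uniq_min_size (filter_uniq _ uU) sub hsz.
  have : (v' + e)%R \in [seq y <- U | y \in map (fun w => w + e)%R V].
    rewrite heq.
    by apply/mapP; exists v'.
  rewrite mem_filter => /andP [_]; rewrite /e.
  by rewrite addrCA.
have hal : size V <= alpha U V.
  apply: alpha_ge; apply: term_cand => //; lia.
have := sum_min_ge uU htV uL hL.
have := alpha_le U V.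
move: hal; set S := (\sum_(x <- L) _)%N; set al := alpha U V.
move=> *; nia.
Qed.
End Main.


Lemma rconv_rr (G : zmodType) (U V : seq G) x : rconv U V x = rr U V x.
Proof.
rewrite /rconv /rr; elim: U => [|u U IH]; first by rewrite big_nil.
rewrite allpairs_cons count_cat IH big_cons count_map; congr (_ + _)%N.
elim: V {IH} => [|v V IHV]; first by rewrite big_nil.
by rewrite /= big_cons IHV.
Qed.

Unset Implicit Arguments.
Local Open Scope ring_scope.

Theorem theorem3p2 (G : zmodType) (t : nat) (U V : seq G) :
  (0 < t)%N -> uniq U -> uniq V -> (t <= size V)%N -> (size V <= size U)%N ->
  ((\sum_(x <- sumset U V) minn (rconv U V x) t)%N)%:Z >=
    t%:Z * ((size U)%:Z + (size V)%:Z - t%:Z - (alpha U V)%:Z).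
Proof.
move=> ht uU uV htV hVU.
rewrite (eq_bigr (fun x => minn (rr U V x) t)); last by move=> x _; rewrite rconv_rr.
apply: (main (n := size V)) => //; first by apply: undup_uniq.
move=> x /rr_posE [u [v [uU1 vV ->]]].
by rewrite mem_undup; apply: allpairs_f.
Qed.
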